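(* Let $W$ be a weighing matrix of order $n$ and weight $k$ with columns $w_1,\dots,w_n$, let $C_i=w_iw_i^T$, and let $L_1,\dots,L_f$ be mutually suitable Latin squares of side $n$ with $L_m=(l_m(i,j))$. Let $\widetilde W_m=(C_{l_m(i,j)})_{i,j=1}^n$ for $m=1,\dots,f$. Define the $n^2\times n^2$ block matrix $W'$ whose $(i,j)$ block is $w_jw_i^T$. Then $W'$ is a weighing matrix of order $n^2$ and weight $k^2$, and $W',\widetilde W_1,\dots,\widetilde W_f$ form a set of $f+1$ mutually unbiased weighing matrices of order $n^2$ and weight $k^2$.
   Context: A weighing matrix of order $n$ and weight $k$ is an $n\times n$ matrix with entries in $\{1,-1,0\}$ such that $WW^T=kI_n$. Two weighing matrices $W_1,W_2$ of order $N$ and weight $K$ are unbiased if $\frac{1}{\sqrt{K}}W_1W_2^T$ is a weighing matrix of order $N$ and weight $K$; mutually unbiased means pairwise unbiased. Two Latin squares $L_1,L_2$ of side $n$ (symbols $\{1,\dots,n\}$) are suitable if for every row $a$ of $L_1$ and row $b$ of $L_2$ there is exactly one column $c$ with $L_1(a,c)=L_2(b,c)$; mutually suitable means pairwise suitable. *)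

(* Defs.v *)
From HB Require Import structures.
From mathcomp Require Import all_boot all_order all_algebra.
Set Implicit Arguments. Unset Strict Implicit. Unset Printing Implicit Defensive.
Import Order.TTheory GRing.Theory Num.Theory.
Local Open Scope ring_scope.

Definition is_weighing (R : nzRingType) (N K : nat) (W : 'M[R]_N) : Prop :=
  (forall i j, W i j = 1 \/ W i j = -1 \/ W i j = 0) /\
  W *m W^T = (K%:R)%:M.

Definition unbiased (R : rcfType) (N K : nat) (W1 W2 : 'M[R]_N) : Prop :=
  is_weighing K ((Num.sqrt (K%:R : R))^-1 *: (W1 *m W2^T)).

Definition mutually_unbiased_weighing (R : rcfType) (I : finType) (N K : nat)
    (F : I -> 'M[R]_N) : Prop :=
  (forall i, is_weighing K (F i)) /\
  (forall i j, i != j -> unbiased K (F i) (F j)).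

(* Latin square of side n, symbols 'I_n (i.e. {1..n} shifted to {0..n-1}). *)
Definition latin_square (n : nat) (L : 'I_n -> 'I_n -> 'I_n) : Prop :=
  (forall a, injective (L a)) /\ (forall c, injective (fun a => L a c)).

Definition suitable (n : nat) (L1 L2 : 'I_n -> 'I_n -> 'I_n) : Prop :=
  forall a b : 'I_n, #|[set c : 'I_n | L1 a c == L2 b c]| = 1%N.

Definition mutually_suitable (n f : nat) (L : 'I_f -> 'I_n -> 'I_n -> 'I_n) : Prop :=
  (forall m, latin_square (L m)) /\
  (forall m1 m2, m1 != m2 -> suitable (L m1) (L m2)).

(* Index p of 'I_(n*n) is read as p = blk p * n + off p, i.e. block index
   blk p and position off p inside the block (both 0-based). *)
Lemma blk_proof (n : nat) (p : 'I_(n * n)) : (p %/ n < n)%N.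
Proof. case: n p => [[]//|n] p; by rewrite ltn_divLR // ltn_ord. Qed.
Lemma off_proof (n : nat) (p : 'I_(n * n)) : (p %% n < n)%N.
Proof. case: n p => [[]//|n] p; by rewrite ltn_pmod. Qed.
Definition blk (n : nat) (p : 'I_(n * n)) : 'I_n := Ordinal (blk_proof p).
Definition off (n : nat) (p : 'I_(n * n)) : 'I_n := Ordinal (off_proof p).

Definition Wprime (R : nzRingType) (n : nat) (W : 'M[R]_n) : 'M[R]_(n * n) :=
  \matrix_(p, q) ((col (blk q) W *m (col (blk p) W)^T) (off p) (off q)).

Definition Cmat (R : nzRingType) (n : nat) (W : 'M[R]_n) (i : 'I_n) : 'M[R]_n :=
  col i W *m (col i W)^T.

Definition Wtilde (R : nzRingType) (n : nat) (W : 'M[R]_n)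
    (L : 'I_n -> 'I_n -> 'I_n) : 'M[R]_(n * n) :=
  \matrix_(p, q) Cmat W (L (blk p) (blk q)) (off p) (off q).

(* Main.v *)
Require Import Defs.
From HB Require Import structures.
From mathcomp Require Import all_boot all_order all_algebra.
From mathcomp Require Import zify ring.
Import Order.TTheory GRing.Theory Num.Theory.
Local Open Scope ring_scope.

Section Aux.
Variable R : rcfType.

Lemma idx_proof {n} (i a : 'I_n) : (i * n + a < n * n)%N.
Proof. have := ltn_ord i; have := ltn_ord a; nia. Qed.

Definition idx n (i a : 'I_n) : 'I_(n*n) := Ordinal (@idx_proof n i a).
Arguments idx {n}.

Lemma blk_idx {n} (i a : 'I_n) : blk (idx i a) = i.
Proof.
apply: val_inj => /=; have n0 : (0 < n)%N := leq_ltn_trans (leq0n a) (ltn_ord a).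
by rewrite divnMDl // divn_small ?addn0.
Qed.

Lemma off_idx {n} (i a : 'I_n) : off (idx i a) = a.
Proof.
apply: val_inj => /=; by rewrite modnMDl modn_small.
Qed.

Lemma idx_blk_off {n} (p : 'I_(n*n)) : idx (blk p) (off p) = p.
Proof. by apply: val_inj => /=; rewrite -divn_eq. Qed.

Lemma eq_idx {n} (p q : 'I_(n*n)) :
  (p == q) = (blk p == blk q) && (off p == off q).
Proof.
apply/eqP/andP => [->//|[/eqP h1 /eqP h2]].
by rewrite -(idx_blk_off p) -(idx_blk_off q) h1 h2.
Qed.

Lemma sum_idx {n} (F : 'I_(n*n) -> R) :
  \sum_p F p = \sum_i \sum_a F (idx i a).
Proof.
rewrite pair_big /=.
rewrite (reindex (fun ia : 'I_n * 'I_n => idx ia.1 ia.2)) /=.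
  by apply: eq_bigr => -[i a].
exists (fun p => (blk p, off p)) => [[i a]|p] _ /=.
  by rewrite blk_idx off_idx.
by rewrite idx_blk_off.
Qed.

Lemma mulmxT_E {n} (A B : 'M[R]_(n*n)) p q :
  (A *m B^T) p q = \sum_j \sum_b A p (idx j b) * B q (idx j b).
Proof.
rewrite !mxE sum_idx; apply: eq_bigr => j _; apply: eq_bigr => b _.
by rewrite mxE.
Qed.

Lemma Wprime_E {n} (W : 'M[R]_n) p q :
  Wprime W p q = W (off p) (blk q) * W (off q) (blk p).
Proof. by rewrite !mxE big_ord1 !mxE. Qed.

Lemma Wtilde_E {n} (W : 'M[R]_n) L p q :
  Wtilde W L p q = W (off p) (L (blk p) (blk q)) * W (off q) (L (blk p) (blk q)).
Proof. by rewrite !mxE big_ord1 !mxE. Qed.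

Definition trip (x : R) := x = 1 \/ x = -1 \/ x = 0.

Lemma trip_mul x y : trip x -> trip y -> trip (x * y).
Proof.
by move=> [->|[->|->]] [->|[->|->]]; rewrite /trip ?mulr1 ?mul1r ?mulr0 ?mul0r
  ?mulrNN ?mulr1 ?mulN1r ?opprK; auto.
Qed.

Lemma wrows {n} (W : 'M[R]_n) k : W *m W^T = k%:R%:M ->
  forall a a', \sum_j W a j * W a' j = k%:R *+ (a == a').
Proof.
move=> h a a'; have := congr1 (fun M : 'M[R]_n => M a a') h; rewrite !mxE => <-.
by apply: eq_bigr => j _; rewrite mxE.
Qed.

Lemma weighing_tr {n} (W : 'M[R]_n) k : W *m W^T = k%:R%:M -> W^T *m W = k%:R%:M.
Proof.
move=> h; have [k0|kn0] := eqVneq (k%:R : R) 0.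
  have W0 : W = 0.
    apply/matrixP => a j; rewrite mxE.
    have := @wrows _ W k h a a; rewrite eqxx mulr1n k0 => /psumr_eq0P H.
    have /eqP := H (fun i _ => ltac:(by rewrite -expr2 sqr_ge0)) j isT.
    by rewrite mulf_eq0 orbb => /eqP ->.
  by rewrite W0 k0; apply/matrixP => i j; rewrite !mxE big1 ?mul0rn // => l _; rewrite !mxE mul0r.
have h1 : W *m ((k%:R)^-1 *: W^T) = 1%:M.
  by rewrite -scalemxAr h scale_scalar_mx mulVf.
have := mulmx1C h1; rewrite -scalemxAl => h2.
have -> : W^T *m W = k%:R *: ((k%:R)^-1 *: (W^T *m W)).
  by rewrite scalerA divff // scale1r.
by rewrite h2 scale_scalar_mx mulr1.
Qed.

Lemma sum_unique {n} (G : 'I_n -> R) (P : pred 'I_n) j0 :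
  P j0 -> (forall j, P j -> j = j0) -> \sum_j G j *+ P j = G j0.
Proof.
move=> Pj0 u; rewrite (bigD1 j0) //= big1 ?addr0 ?Pj0 ?mulr1n // => j hj.
case hP: (P j); last by rewrite mulr0n.
by move: hj; rewrite (u _ hP) eqxx.
Qed.

Lemma sqrt_k2 k : Num.sqrt ((k ^ 2)%:R : R) = k%:R.
Proof. by rewrite natrX sqrtr_sqr normr_nat. Qed.

Lemma unb_gen {N} (A B : 'M[R]_N) k :
  A *m A^T = (k^2)%:R%:M -> B *m B^T = (k^2)%:R%:M ->
  (forall p q, exists e, trip e /\ (A *m B^T) p q = k%:R * e) ->
  unbiased (k^2) A B.
Proof.
move=> hA hB he; rewrite /unbiased sqrt_k2; split.
  move=> p q; rewrite mxE; have [e [te ->]] := he p q.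
  have [k0|kn0] := eqVneq (k%:R : R) 0.
    by rewrite k0 invr0 mul0r; auto.
  by rewrite mulrA mulVf // mul1r.
have hB' := @weighing_tr _ B _ hB.
rewrite linearZ /= -scalemxAl -scalemxAr scalerA trmx_mul trmxK.
rewrite mulmxA -(mulmxA A) hB' mul_mx_scalar -scalemxAl hA !scale_scalar_mx.
congr (_%:M); rewrite natrX.
have [k0|kn0] := eqVneq (k%:R : R) 0; first by rewrite k0 expr0n /= !mulr0.
by field.
Qed.

Lemma unb_gen2 {N} (A B : 'M[R]_N) k :
  A *m A^T = (k^2)%:R%:M -> B *m B^T = (k^2)%:R%:M ->
  (forall p q, exists e, trip e /\ (A *m B^T) p q = k%:R * e) ->
  unbiased (k^2) A B /\ unbiased (k^2) B A.
Proof.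
move=> hA hB he; split; first exact: unb_gen.
apply: unb_gen => // p q.
have -> : B *m A^T = (A *m B^T)^T by rewrite trmx_mul trmxK.
by rewrite mxE.
Qed.

End Aux.

Theorem mainTheorem4 (R : rcfType) (n k f : nat) (W : 'M[R]_n)
    (L : 'I_f -> 'I_n -> 'I_n -> 'I_n) :
  is_weighing k W ->
  mutually_suitable L ->
  is_weighing (k ^ 2) (Wprime W) /\
  mutually_unbiased_weighing (k ^ 2)
    (fun m : option 'I_f =>
       match m with None => Wprime W | Some m' => Wtilde W (L m') end).
Proof.
move=> [Wt hW] [lat suit].
have hC := @weighing_tr R _ W k hW.
have hr := @wrows R _ W k hW.
have hc : forall i i', \sum_b W b i * W b i' = k%:R *+ (i == i').
  move=> i i'; rewrite -(@wrows R _ W^T k _ i i'); last by rewrite trmxK.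
  by apply: eq_bigr => b _; rewrite !mxE.
have hWp : is_weighing (k^2) (Wprime W).
  split; first by move=> p q; rewrite Wprime_E; apply: trip_mul; apply: Wt.
  apply/matrixP => p q; rewrite mulmxT_E mxE eq_idx.
  under eq_bigr => j _ do under eq_bigr => b _ do rewrite !Wprime_E !blk_idx !off_idx.
  move: (blk p) (blk q) (off p) (off q) => i i' a a'.
  transitivity (\sum_j (W a j * W a' j) * \sum_b (W b i * W b i')).
    apply: eq_bigr => j _; rewrite mulr_sumr; apply: eq_bigr => b _; ring.
  rewrite -mulr_suml hr hc.
  by case: (i == i'); case: (a == a'); rewrite /= ?mulr0n ?mulr1n ?mul0r ?mulr0 // natrX expr2.
have hWt : forall L0, latin_square L0 -> is_weighing (k^2) (Wtilde W L0).
  move=> L0 [rowi coli]; split.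
    by move=> p q; rewrite Wtilde_E; apply: trip_mul; apply: Wt.
  apply/matrixP => p q; rewrite mulmxT_E mxE eq_idx.
  under eq_bigr => j _ do under eq_bigr => b _ do rewrite !Wtilde_E !blk_idx !off_idx.
  move: (blk p) (blk q) (off p) (off q) => i i' a a'.
  transitivity (\sum_j (W a (L0 i j) * W a' (L0 i' j)) * (k%:R *+ (L0 i j == L0 i' j))).
    apply: eq_bigr => j _; rewrite -hc mulr_sumr; apply: eq_bigr => b _; ring.
  have [<-|ne] := eqVneq i i'.
    under eq_bigr => j _ do rewrite eqxx mulr1n.
    rewrite -mulr_suml.
    have -> : \sum_j (W a (L0 i j) * W a' (L0 i j)) = \sum_l W a l * W a' l.
      by rewrite [RHS](reindex_inj (rowi i)).
    rewrite hr.
    by case: (a == a'); rewrite /= ?mulr0n ?mulr1n ?mul0r // natrX expr2.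
  rewrite big1 /= ?mul0rn // => j _.
  have -> : (L0 i j == L0 i' j) = false.
    apply/negbTE; apply: contra ne => /eqP h; apply/eqP; exact: (coli j _ _ h).
  by rewrite mulr0n mulr0.
have hex : forall m p q, exists e, @trip R e /\
    (Wprime W *m (Wtilde W (L m))^T) p q = k%:R * e.
  move=> m p q; have [rowi _] := lat m.
  rewrite mulmxT_E.
  under eq_bigr => j _ do under eq_bigr => b _ do rewrite Wprime_E Wtilde_E !blk_idx !off_idx.
  move: (blk p) (blk q) (off p) (off q) => i i' a a'.
  have /codomP [j0 hj0] := inj_card_onto (rowi i') (leqnn _) i.
  have hin : forall j, (i == L m i' j) = (j == j0).
    move=> j; apply/eqP/eqP => [h|->] //; apply: (rowi i'); by rewrite -h.
  exists (W a j0 * W a' i); split; first by apply: trip_mul; apply: Wt.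
  transitivity (\sum_j (W a j * W a' (L m i' j) * k%:R) *+ (i == L m i' j)).
    apply: eq_bigr => j _; rewrite -mulrnAr -hc mulr_sumr; apply: eq_bigr => b _; ring.
  rewrite (bigD1 j0) //= big1 ?addr0 => [|j hj]; last by rewrite hin (negbTE hj) mulr0n.
  rewrite hin eqxx mulr1n -hj0; ring.
split => //; split.
  by case=> [m|] //; apply: hWt (lat m).
case=> [m1|] [m2|] //= hne.
- have ne : m1 != m2 by apply: contraNneq hne => ->.
  apply: unb_gen; [exact: (hWt _ (lat m1)).2|exact: (hWt _ (lat m2)).2|] => p q.
  rewrite mulmxT_E.
  under eq_bigr => j _ do under eq_bigr => b _ do rewrite !Wtilde_E !blk_idx !off_idx.
  move: (blk p) (blk q) (off p) (off q) => i i' a a'.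
  have /eqP/cards1P [j0 hj0] := suit m1 m2 ne i i'.
  have hin : forall j, (L m1 i j == L m2 i' j) = (j == j0).
    by move=> j; rewrite -[j == j0]in_set1 -hj0 inE.
  have e0 : L m2 i' j0 = L m1 i j0 by apply/eqP; rewrite eq_sym hin.
  exists (W a (L m1 i j0) * W a' (L m1 i j0)); split; first by apply: trip_mul; apply: Wt.
  transitivity (\sum_j (W a (L m1 i j) * W a' (L m2 i' j) * k%:R) *+ (L m1 i j == L m2 i' j)).
    apply: eq_bigr => j _; rewrite -mulrnAr -hc mulr_sumr; apply: eq_bigr => b _; ring.
  rewrite (bigD1 j0) //= big1 ?addr0 => [|j hj]; last by rewrite hin (negbTE hj) mulr0n.
  rewrite hin eqxx mulr1n e0; ring.
- have [_ h] := @unb_gen2 R _ _ _ k hWp.2 (hWt _ (lat m1)).2 (hex m1). exact: h.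
- have [h _] := @unb_gen2 R _ _ _ k hWp.2 (hWt _ (lat m2)).2 (hex m2). exact: h.
Qed.
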